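(* Let $R=\mathbb C[x,y,z,w]$ and $I=\langle x,z,w\rangle\cap\langle x,y\rangle$. There is no collection $\Lambda=(\ell_1,\ldots,\ell_n)$ of linear forms in $R$ together with an integer $a\in\{1,\ldots,n\}$ satisfying $n-a+1=3$ and $\sqrt{I_a(\Lambda)}=I$.
   Context: For a collection $\Lambda=(\ell_1,\ldots,\ell_n)$ of linear forms (possibly some proportional) and $1\le a\le n$, $I_a(\Lambda)$ is the ideal generated by all products $\ell_{i_1}\cdots\ell_{i_a}$ with $1\le i_1<\cdots<i_a\le n$. *)

(* Defs.v *)
(* R = F[x,y,z,w] realised as iterated univariate polynomials
   {poly {poly {poly {poly F}}}}, variables x (innermost), y, z, w (outermost). *)
From HB Require Import structures.
From mathcomp Require Import all_boot all_order all_algebra.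
Set Implicit Arguments. Unset Strict Implicit. Unset Printing Implicit Defensive.
Import Order.TTheory GRing.Theory Num.Theory.
Local Open Scope ring_scope.

Definition P4 (F : numClosedFieldType) := {poly {poly {poly {poly F}}}}.

Definition cst (F : numClosedFieldType) (c : F) : P4 F := c%:P%:P%:P%:P.
Definition varx (F : numClosedFieldType) : P4 F := ('X : {poly F})%:P%:P%:P.
Definition vary (F : numClosedFieldType) : P4 F := ('X : {poly {poly F}})%:P%:P.
Definition varz (F : numClosedFieldType) : P4 F := ('X : {poly {poly {poly F}}})%:P.
Definition varw (F : numClosedFieldType) : P4 F := 'X.

Definition in_ideal (F : numClosedFieldType) (G : seq (P4 F)) (f : P4 F) : Prop :=
  exists c : seq (P4 F), size c = size G /\
    f = \sum_(i < size G) c`_i * G`_i.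

Definition in_radical (F : numClosedFieldType) (G : seq (P4 F)) (f : P4 F) : Prop :=
  exists k : nat, in_ideal G (f ^+ k).

Definition is_linform (F : numClosedFieldType) (l : P4 F) : Prop :=
  exists c1 c2 c3 c4 : F,
    l = cst c1 * varx F + cst c2 * vary F + cst c3 * varz F + cst c4 * varw F.

Definition Ia_gens (F : numClosedFieldType) (n : nat) (lam : 'I_n -> P4 F) (a : nat)
  : seq (P4 F) :=
  [seq (\prod_(i in A) lam i) | A : {set 'I_n} <- enum [set B : {set 'I_n} | #|B| == a]].

(* Main.v *)
Require Import Defs.
From HB Require Import structures.
From mathcomp Require Import all_boot all_order all_algebra.
From mathcomp Require Import zify ring.
Import Order.TTheory GRing.Theory Num.Theory.
Local Open Scope ring_scope.

Section Aux.
Context {F : numClosedFieldType}.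
Implicit Types (f g : P4 F).

Definition ev (p1 p2 p3 p4 : F) (f : P4 F) : F :=
  (((f.[p4%:P%:P%:P]).[p3%:P%:P]).[p2%:P]).[p1].

Lemma evD p1 p2 p3 p4 f g : ev p1 p2 p3 p4 (f + g) = ev p1 p2 p3 p4 f + ev p1 p2 p3 p4 g.
Proof. by rewrite /ev !hornerD. Qed.
Lemma evM p1 p2 p3 p4 f g : ev p1 p2 p3 p4 (f * g) = ev p1 p2 p3 p4 f * ev p1 p2 p3 p4 g.
Proof. by rewrite /ev !hornerM. Qed.
Lemma ev0 p1 p2 p3 p4 : ev p1 p2 p3 p4 0 = 0.
Proof. by rewrite /ev !horner0. Qed.
Lemma ev1 p1 p2 p3 p4 : ev p1 p2 p3 p4 1 = 1.
Proof. by rewrite /ev !hornerC. Qed.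
Lemma evX p1 p2 p3 p4 f k : ev p1 p2 p3 p4 (f ^+ k) = ev p1 p2 p3 p4 f ^+ k.
Proof. by rewrite /ev !horner_exp. Qed.
Lemma ev_sum p1 p2 p3 p4 m (G : 'I_m -> P4 F) :
  ev p1 p2 p3 p4 (\sum_(i < m) G i) = \sum_(i < m) ev p1 p2 p3 p4 (G i).
Proof. exact: (big_morph _ (evD p1 p2 p3 p4) (ev0 p1 p2 p3 p4)). Qed.
Lemma ev_prod p1 p2 p3 p4 (I : finType) (P : pred I) (G : I -> P4 F) :
  ev p1 p2 p3 p4 (\prod_(i | P i) G i) = \prod_(i | P i) ev p1 p2 p3 p4 (G i).
Proof. exact: (big_morph _ (evM p1 p2 p3 p4) (ev1 p1 p2 p3 p4)). Qed.
Lemma ev_cst p1 p2 p3 p4 c : ev p1 p2 p3 p4 (cst c) = c.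
Proof. by rewrite /ev /cst !hornerC. Qed.
Lemma ev_x p1 p2 p3 p4 : ev p1 p2 p3 p4 (varx F) = p1.
Proof. by rewrite /ev /varx !hornerC hornerX. Qed.
Lemma ev_y p1 p2 p3 p4 : ev p1 p2 p3 p4 (vary F) = p2.
Proof. by rewrite /ev /vary !hornerC hornerX hornerC. Qed.
Lemma ev_z p1 p2 p3 p4 : ev p1 p2 p3 p4 (varz F) = p3.
Proof. by rewrite /ev /varz hornerC hornerX !hornerC. Qed.
Lemma ev_w p1 p2 p3 p4 : ev p1 p2 p3 p4 (varw F) = p4.
Proof. by rewrite /ev /varw hornerX !hornerC. Qed.

Lemma in_ideal2P (g1 g2 f : P4 F) : in_ideal [:: g1; g2] f <-> exists c1 c2, f = c1 * g1 + c2 * g2.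
Proof.
split.
  move=> [c [_ ->]]; exists c`_0, c`_1.
  by rewrite /= !big_ord_recl big_ord0 /= addr0.
move=> [c1 [c2 ->]]; exists [:: c1; c2]; split=> //.
by rewrite /= !big_ord_recl big_ord0 /= addr0.
Qed.

Lemma in_ideal3P (g1 g2 g3 f : P4 F) : in_ideal [:: g1; g2; g3] f <->
  exists c1 c2 c3, f = c1 * g1 + c2 * g2 + c3 * g3.
Proof.
split.
  move=> [c [_ ->]]; exists c`_0, c`_1, c`_2.
  by rewrite /= !big_ord_recl big_ord0 /= addr0 addrA.
move=> [c1 [c2 [c3 ->]]]; exists [:: c1; c2; c3]; split=> //.
by rewrite /= !big_ord_recl big_ord0 /= addr0 addrA.
Qed.

Lemma mem_in_ideal (G : seq (P4 F)) g : g \in G -> in_ideal G g.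
Proof.
elim: G => [|h G IH] //=; rewrite inE; case: eqP => [-> _ | _ /= /IH [c [Hs Hc]]].
  exists (1 :: nseq (size G) 0); split; first by rewrite /= size_nseq.
  rewrite big_ord_recl /= mul1r big1 ?addr0 // => i _.
  by rewrite ?lift0 /= nth_nseq if_same mul0r.
exists (0 :: c); split; first by rewrite /= Hs.
rewrite big_ord_recl /= mul0r add0r Hc; apply: eq_bigr => i _.
by rewrite ?lift0.
Qed.

Lemma card3 (T : finType) (A : {set T}) i j k :
  i \in A -> j \in A -> k \in A -> i != j -> i != k -> j != k -> (3 <= #|A|)%N.
Proof.
move=> iA jA kA ij ik jk.
have ji : j != i by rewrite eq_sym.
have ki : k != i by rewrite eq_sym.
have kj : k != j by rewrite eq_sym.
rewrite (cardsD1 i) iA (cardsD1 j (A :\ i)) !inE ji jA.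
rewrite (cardsD1 k (A :\ i :\ j)) !inE ki kj kA /=.
by rewrite !add1n !ltnS.
Qed.

Lemma card3P (T : finType) (A : {set T}) : (3 <= #|A|)%N ->
  exists i j k, i \in A /\ j \in A /\ k \in A /\ i != j /\ i != k /\ j != k.
Proof.
move=> h.
have /card_gt0P [i iA] : (0 < #|A|)%N by lia.
move: h; rewrite (cardsD1 i) iA add1n ltnS => h.
have /card_gt0P [j jA] : (0 < #|A :\ i|)%N by lia.
move: h; rewrite (cardsD1 j) jA add1n ltnS => h.
have /card_gt0P [k kA] : (0 < #|A :\ i :\ j|)%N by lia.
move: jA kA; rewrite !inE => /andP [ji jA] /and3P [kj ki kA].
exists i, j, k; do !split=> //; by rewrite eq_sym.
Qed.

Lemma subset_card (T : finType) (A : {set T}) m : (m <= #|A|)%N ->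
  exists B : {set T}, B \subset A /\ #|B| = m.
Proof.
elim: m => [|m IH] h; first by exists set0; rewrite sub0set cards0.
have [B [sBA cB]] := IH (ltnW h).
have : ~~ (A \subset B).
  apply/negP => /subset_leq_card; rewrite cB; lia.
case/subsetPn => x xA xB.
exists (x |: B); split; first by rewrite subUset sub1set xA sBA.
by rewrite cardsU1 xB cB.
Qed.

End Aux.

Section Gen.
Variable R : comNzRingType.
Lemma gg1 (a b c : R) : a = 1 * a + 0 * b + 0 * c.
Proof. by rewrite mul1r !mul0r !addr0. Qed.
Lemma gg2 (a b : R) : a = 1 * a + 0 * b.
Proof. by rewrite mul1r !mul0r !addr0. Qed.
Lemma gg3 (a b c d : R) : a * b = 0 * c + a * b + 0 * d.
Proof. by rewrite !mul0r add0r addr0. Qed.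
Lemma gg4 (a b c d : R) : a * b = 0 * c + 0 * d + a * b.
Proof. by rewrite !mul0r !add0r. Qed.
Lemma gg5 (a b c : R) : a * b = 0 * c + b * a.
Proof. by rewrite !mul0r add0r mulrC. Qed.
End Gen.

Section S2.
Context {F : numClosedFieldType}.
Lemma ev_lin (c1 c2 c3 c4 p1 p2 p3 p4 : F) :
  ev p1 p2 p3 p4 (cst c1 * varx F + cst c2 * vary F + cst c3 * varz F + cst c4 * varw F)
  = c1 * p1 + c2 * p2 + c3 * p3 + c4 * p4.
Proof.
rewrite !evD !evM.
congr (_ * _ + _ * _ + _ * _ + _ * _); [exact: ev_cst|exact: ev_x|exact: ev_cst|exact: ev_y|
  exact: ev_cst|exact: ev_z|exact: ev_cst|exact: ev_w].
Qed.
Lemma ev_comb2 (c1 c2 : P4 F) p1 p2 p3 p4 :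
  ev p1 p2 p3 p4 (c1 * varx F + c2 * vary F) = ev p1 p2 p3 p4 c1 * p1 + ev p1 p2 p3 p4 c2 * p2.
Proof.
rewrite evD !evM; congr (_ * _ + _ * _); [exact: ev_x|exact: ev_y].
Qed.
Lemma ev_comb3 (c1 c2 c3 : P4 F) p1 p2 p3 p4 :
  ev p1 p2 p3 p4 (c1 * varx F + c2 * varz F + c3 * varw F) =
  ev p1 p2 p3 p4 c1 * p1 + ev p1 p2 p3 p4 c2 * p3 + ev p1 p2 p3 p4 c3 * p4.
Proof.
rewrite !evD !evM; congr (_ * _ + _ * _ + _ * _); [exact: ev_x|exact: ev_z|exact: ev_w].
Qed.
Lemma ev_yz p1 p2 p3 p4 : ev p1 p2 p3 p4 (vary F * varz F) = p2 * p3.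
Proof. rewrite evM; congr (_ * _); [exact: ev_y|exact: ev_z]. Qed.
Lemma ev_yw p1 p2 p3 p4 : ev p1 p2 p3 p4 (vary F * varw F) = p2 * p4.
Proof. rewrite evM; congr (_ * _); [exact: ev_y|exact: ev_w]. Qed.
Lemma idx3 : in_ideal [:: varx F; varz F; varw F] (varx F).
Proof. apply/in_ideal3P; exists 1, 0, 0; exact: gg1. Qed.
Lemma idx2 : in_ideal [:: varx F; vary F] (varx F).
Proof. apply/in_ideal2P; exists 1, 0; exact: gg2. Qed.
Lemma idyz3 : in_ideal [:: varx F; varz F; varw F] (vary F * varz F).
Proof. apply/in_ideal3P; exists 0, (vary F), 0; exact: gg3. Qed.
Lemma idyz2 : in_ideal [:: varx F; vary F] (vary F * varz F).
Proof. apply/in_ideal2P; exists 0, (varz F); exact: gg5. Qed.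
Lemma idyw3 : in_ideal [:: varx F; varz F; varw F] (vary F * varw F).
Proof. apply/in_ideal3P; exists 0, 0, (vary F); exact: gg4. Qed.
Lemma idyw2 : in_ideal [:: varx F; vary F] (vary F * varw F).
Proof. apply/in_ideal2P; exists 0, (varw F); exact: gg5. Qed.
End S2.

Theorem mainTheorem6 (F : numClosedFieldType) (n : nat) (lam : 'I_n -> P4 F) (a : nat) :
  (forall i, is_linform (lam i) /\ lam i != 0) ->
  (1 <= a <= n)%N ->
  (n - a + 1 = 3)%N ->
  ~ (forall f : P4 F,
       in_radical (Ia_gens lam a) f <->
       (in_ideal [:: varx F; varz F; varw F] f /\ in_ideal [:: varx F; vary F] f)).
Proof.
move=> Hlin Ha Hna H.
have ea : a = (n - 2)%N by lia.
have n3 : (3 <= n)%N by lia.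
pose L i (p1 p2 p3 p4 : F) := ev p1 p2 p3 p4 (lam i).
pose A i := L i 1 0 0 0. pose Bc i := L i 0 1 0 0.
pose C i := L i 0 0 1 0. pose D i := L i 0 0 0 1.
have LE : forall i p1 p2 p3 p4, L i p1 p2 p3 p4 =
   A i * p1 + Bc i * p2 + C i * p3 + D i * p4.
  move=> i p1 p2 p3 p4; rewrite /A /Bc /C /D /L.
  have [[c1 [c2 [c3 [c4 ->]]]] _] := Hlin i.
  rewrite !ev_lin; ring.
pose Zs p1 p2 p3 p4 := [set i | L i p1 p2 p3 p4 == 0].
have ZsE : forall i p1 p2 p3 p4, (i \in Zs p1 p2 p3 p4) = (L i p1 p2 p3 p4 == 0).
  by move=> *; rewrite inE.
have Rad : forall p1 p2 p3 p4 f, (3 <= #|Zs p1 p2 p3 p4|)%N ->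
   in_ideal [:: varx F; varz F; varw F] f -> in_ideal [:: varx F; vary F] f ->
   ev p1 p2 p3 p4 f = 0.
  move=> p1 p2 p3 p4 f h3 h1 h2.
  have [k [c [_ Hc]]] := (proj2 (H f)) (conj h1 h2).
  have : ev p1 p2 p3 p4 (f ^+ k) = 0.
    rewrite Hc ev_sum big1 // => i _.
    rewrite evM.
    suff -> : ev p1 p2 p3 p4 (Ia_gens lam a)`_i = 0 by rewrite mulr0.
    have hi : (i < size (enum [set B : {set 'I_n} | #|B| == a]))%N.
      by rewrite -(size_map (fun A : {set 'I_n} => \prod_(j in A) lam j)); exact: ltn_ord.
    rewrite /Ia_gens (nth_map set0) //.
    set B := nth set0 _ _.
    have : B \in enum [set B : {set 'I_n} | #|B| == a] by apply: mem_nth.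
    rewrite mem_enum inE => /eqP cB.
    have : ~~ (B \subset ~: Zs p1 p2 p3 p4).
      apply/negP => /subset_leq_card; rewrite cB.
      have := cardsC (Zs p1 p2 p3 p4); rewrite card_ord.
      set X := #|~: _|; set Y := #|Zs _ _ _ _|; lia.
    case/subsetPn => j jB; rewrite inE negbK ZsE => /eqP Lj.
    by rewrite ev_prod (bigD1 j jB) /=; move: Lj; rewrite /L => ->; rewrite mul0r.
  by rewrite evX => /eqP; rewrite expf_eq0 => /andP [_ /eqP ->].
have F1x : forall p1 p2 p3 p4, (3 <= #|Zs p1 p2 p3 p4|)%N -> p1 = 0.
  move=> p1 p2 p3 p4 h3; rewrite -(ev_x p1 p2 p3 p4); exact: Rad h3 idx3 idx2.
have F1yz : forall p1 p2 p3 p4, (3 <= #|Zs p1 p2 p3 p4|)%N -> p2 * p3 = 0.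
  move=> p1 p2 p3 p4 h3; rewrite -(ev_yz p1 p2 p3 p4); exact: Rad h3 idyz3 idyz2.
have F1yw : forall p1 p2 p3 p4, (3 <= #|Zs p1 p2 p3 p4|)%N -> p2 * p4 = 0.
  move=> p1 p2 p3 p4 h3; rewrite -(ev_yw p1 p2 p3 p4); exact: Rad h3 idyw3 idyw2.
have F2 : forall p1 p2 p3 p4, p1 = 0 -> (p2 = 0 \/ (p3 = 0 /\ p4 = 0)) ->
    (3 <= #|Zs p1 p2 p3 p4|)%N.
  move=> p1 p2 p3 p4 e1 e234; rewrite leqNgt; apply/negP => hlt.
  have : (a <= #|~: Zs p1 p2 p3 p4|)%N.
    have := cardsC (Zs p1 p2 p3 p4); rewrite card_ord.
    set X := #|~: _|; set Y := #|Zs _ _ _ _|; lia.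
  case/subset_card => B [sB cB].
  pose g := \prod_(j in B) lam j.
  have gI : g \in Ia_gens lam a.
    by apply/mapP; exists B => //; rewrite mem_enum inE cB.
  have hr : in_radical (Ia_gens lam a) g by exists 1%N; rewrite expr1; exact: mem_in_ideal.
  have [h1 h2] := proj1 (H g) hr.
  have gnz : ev p1 p2 p3 p4 g != 0.
    rewrite /g ev_prod; apply/prodf_neq0 => j /(subsetP sB).
    by rewrite inE ZsE.
  case: e234 => [e2 | [e3 e4]].
    move/in_ideal2P: h2 => [c1 [c2 eg]]; move: gnz.
    by rewrite eg ev_comb2 e1 e2 !mulr0 addr0 eqxx.
  move/in_ideal3P: h1 => [c1 [c2 [c3 eg]]]; move: gnz.
  by rewrite eg ev_comb3 e1 e3 e4 !mulr0 !addr0 eqxx.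
have n0 : (0 < n)%N by lia.
pose S := [set i | (C i == 0) && (D i == 0)].
have S3 : (3 <= #|S|)%N.
  rewrite leqNgt; apply/negP => hS.
  have hex : forall t : 'I_n.+1, exists i, i \in Zs 0 0 1 t%:R :\: S.
    move=> t; have h3 := F2 0 0 1 t%:R erefl (or_introl erefl).
    have : ~~ (Zs 0 0 1 t%:R \subset S).
      apply/negP => /subset_leq_card.
      set X := #|S|; set Y := #|Zs _ _ _ _|; lia.
    by case/subsetPn => i h1 h2; exists i; rewrite in_setD h1 h2.
  pose f (t : 'I_n.+1) := odflt (Ordinal n0) [pick i in Zs 0 0 1 t%:R :\: S].
  have finj : injective f.
    move=> t s; rewrite /f.
    case: (pickP (fun i => i \in Zs 0 0 1 t%:R :\: S)) => [i hi|h0]; last first.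
      by have [i hi] := hex t; rewrite h0 in hi.
    case: (pickP (fun i => i \in Zs 0 0 1 s%:R :\: S)) => [j hj|h0]; last first.
      by have [j hj] := hex s; rewrite h0 in hj.
    move=> /= eij; subst j.
    move: hi hj; rewrite !in_setD => /andP [hiS hiZ] /andP [_ hjZ].
    move: hiZ hjZ; rewrite !ZsE !LE => /eqP hi /eqP hj.
    case: (eqVneq t s) => [//|ts]; exfalso.
    have Dz : D i = 0.
      have : D i * (t%:R - s%:R) = 0.
        have -> : D i * (t%:R - s%:R) =
          (A i * 0 + Bc i * 0 + C i * 1 + D i * t%:R) -
          (A i * 0 + Bc i * 0 + C i * 1 + D i * s%:R) by ring.
        by rewrite hi hj subrr.
      move/eqP; rewrite mulf_eq0 subr_eq0 eqr_nat => /orP [/eqP //|] /eqP /val_inj ets.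
      by rewrite ets eqxx in ts.
    have Cz : C i = 0.
      by move: hi; rewrite Dz; have -> : forall x y z : F, x * 0 + y * 0 + z * 1 + 0 * t%:R = z by move=> *; ring.
    by move: hiS; rewrite /S inE Cz Dz eqxx.
  by have := @leq_card _ _ f finj; rewrite !card_ord; lia.
have [u [Cu Du Bu]] : exists u, [/\ C u = 0, D u = 0 & Bc u != 0].
  have : ~~ (S \subset Zs 0 1 1 0).
    apply/negP => sub; have h3 := leq_trans S3 (subset_leq_card sub).
    by have := F1yz 0 1 1 0 h3; rewrite mulr1 => /eqP; rewrite oner_eq0.
  case/subsetPn => u; rewrite /S inE => /andP [/eqP Cu /eqP Du].
  rewrite ZsE LE Cu Du => hu; exists u; split=> //.
  apply: contra hu => /eqP ->; apply/eqP; ring.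
have Z3 := F2 0 1 0 0 erefl (or_intror (conj erefl erefl)).
have [t1 [t2 [t3 [h1 [h2 [h3 [d12 [d13 d23]]]]]]]] := card3P _ _ Z3.
have B1 : Bc t1 = 0 by move: h1; rewrite ZsE => /eqP H1; exact: H1.
have B2 : Bc t2 = 0 by move: h2; rewrite ZsE => /eqP H1; exact: H1.
have B3 : Bc t3 = 0 by move: h3; rewrite ZsE => /eqP H1; exact: H1.
pose det i j := C i * D j - C j * D i.
have cram : forall i j, i != j -> Bc i = 0 -> Bc j = 0 -> det i j != 0 -> False.
  move=> i j ij Bi Bj hD.
  pose y0 := - (A u / Bc u). pose z0 := (A j * D i - A i * D j) / det i j.
  pose w0 := (A i * C j - A j * C i) / det i j.
  have ui : u != i by apply/eqP => e; move: Bu; rewrite e Bi eqxx.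
  have uj : u != j by apply/eqP => e; move: Bu; rewrite e Bj eqxx.
  have h3' : (3 <= #|Zs 1%R y0 z0 w0|)%N.
    apply: (card3 _ _ u i j) => //; rewrite ZsE LE; apply/eqP.
    - rewrite Cu Du /y0; field; exact: Bu.
    - rewrite Bi /z0 /w0; move: hD; rewrite /det => hD; field; exact: hD.
    - rewrite Bj /z0 /w0; move: hD; rewrite /det => hD; field; exact: hD.
  by have := F1x _ _ _ _ h3' => /eqP; rewrite oner_eq0.
have degen : forall i j k, i != j -> i != k -> j != k -> Bc i = 0 -> Bc j = 0 -> Bc k = 0 ->
   det i j = 0 -> det i k = 0 -> C i = 0 /\ D i = 0.
  move=> i j k ij ik jk Bi Bj Bk dij dik.
  have h3' : (3 <= #|Zs 0%R 1%R (- D i)%R (C i)|)%N.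
    apply: (card3 _ _ i j k) => //; rewrite ZsE LE; apply/eqP.
    - rewrite Bi; ring.
    - apply: (eq_trans _ dij); rewrite /det Bj; ring.
    - apply: (eq_trans _ dik); rewrite /det Bk; ring.
  split.
    by have := F1yw _ _ _ _ h3'; rewrite mul1r.
  have := F1yz _ _ _ _ h3'; rewrite mul1r => /eqP; rewrite oppr_eq0 => /eqP H0; exact: H0.
have detN : forall x y, det y x = - det x y by move=> x y; rewrite /det; ring.
case: (eqVneq (det t1 t2) 0) => [e12|hD]; last exact: (cram t1 t2 d12 B1 B2 hD).
case: (eqVneq (det t1 t3) 0) => [e13|hD]; last exact: (cram t1 t3 d13 B1 B3 hD).
case: (eqVneq (det t2 t3) 0) => [e23|hD]; last exact: (cram t2 t3 d23 B2 B3 hD).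
have d21 : t2 != t1 by rewrite eq_sym.
have d31 : t3 != t1 by rewrite eq_sym.
have d32 : t3 != t2 by rewrite eq_sym.
have [C1 D1] := degen t1 t2 t3 d12 d13 d23 B1 B2 B3 e12 e13.
have e21 : det t2 t1 = 0 by rewrite detN e12 oppr0.
have e31 : det t3 t1 = 0 by rewrite detN e13 oppr0.
have e32 : det t3 t2 = 0 by rewrite detN e23 oppr0.
have [C2 D2] := degen t2 t1 t3 d21 d23 d13 B2 B1 B3 e21 e23.
have [C3 D3] := degen t3 t1 t2 d31 d32 d12 B3 B1 B2 e31 e32.
have h3' : (3 <= #|Zs 0%R 1%R 0%R 1%R|)%N.
  apply: (card3 _ _ t1 t2 t3) => //; rewrite ZsE LE; apply/eqP.
  - rewrite B1 C1 D1; ring.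
  - rewrite B2 C2 D2; ring.
  - rewrite B3 C3 D3; ring.
by have := F1yw _ _ _ _ h3'; rewrite mulr1 => /eqP; rewrite oner_eq0.
Qed.
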